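(* Let $M\models\mathrm{AA}$ and let $\phi(x,\bar y)$ be an affine formula. Then for each tuple $\bar b$ in $M$ there is a unique $a\in M$ such that $\phi^M(a,\bar b)=\sup_x\phi^M(x,\bar b)$ and $\phi^M(t,\bar b)<\phi^M(a,\bar b)$ for all $t<a$. Moreover, the map $\bar b\mapsto a$ is definable.
   Context: Structures are complete metric spaces of diameter at most $1$ in the language $L=\{+,\cdot,\wedge,\vee,0,1\}$ (operations $1$-Lipschitz, $d$ the only relation symbol). Affine formulas are built from $1$ and atomic formulas $d(t_1,t_2)$ using $+$, scalar multiplication by reals, $\sup_x$, $\inf_x$; $\phi^M$ denotes the real-valued interpretation. $\mathrm{AA}$ is the set of all closed affine conditions $\phi\le\psi$ true in every model of first-order Peano arithmetic (formulated in $L$, with $\le$ given by $x\wedge y=x$, lattice operations min/max, and discrete metric). $x\le y$ means $x\wedge y=x$, $t<a$ means $t\le a$ and $t\ne a$. A function $f:M^m\to M$ is definable if the predicate $(\bar x,y)\mapsto d(f(\bar x),y)$ is a uniform limit on $M^{m+1}$ of interpretations of affine formulas with parameters from $M$. *)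

(* Defs.v *)
From HB Require Import structures.
From mathcomp Require Import all_boot all_order all_algebra.
From mathcomp Require Import boolp classical_sets reals.
Set Implicit Arguments. Unset Strict Implicit. Unset Printing Implicit Defensive.
Import Order.TTheory GRing.Theory Num.Theory.
Local Open Scope ring_scope.
Local Open Scope classical_set_scope.

Record Lops (T : Type) := MkLops {
  op_add : T -> T -> T;
  op_mul : T -> T -> T;
  op_meet : T -> T -> T;
  op_join : T -> T -> T;
  op_zero : T;
  op_one : T }.

Inductive term :=
| TVar of nat
| TZero | TOne
| TAdd of term & term
| TMul of term & term
| TMeet of term & term
| TJoin of term & term.

Fixpoint tev (T : Type) (o : Lops T) (v : nat -> T) (t : term) : T :=
  match t with
  | TVar n => v n
  | TZero => op_zero o
  | TOne => op_one o
  | TAdd a b => op_add o (tev o v a) (tev o v b)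
  | TMul a b => op_mul o (tev o v a) (tev o v b)
  | TMeet a b => op_meet o (tev o v a) (tev o v b)
  | TJoin a b => op_join o (tev o v a) (tev o v b)
  end.

Fixpoint tfv (t : term) : seq nat :=
  match t with
  | TVar n => [:: n]
  | TZero | TOne => [::]
  | TAdd a b | TMul a b | TMeet a b | TJoin a b => tfv a ++ tfv b
  end.

Definition upd (T : Type) (v : nat -> T) (n : nat) (a : T) : nat -> T :=
  fun k => if k == n then a else v k.

Inductive aform (R : realType) :=
| AOne
| ADist of term & term
| APlus of aform R & aform R
| AScale of R & aform R
| ASup of nat & aform R
| AInf of nat & aform R.
Arguments AOne {R}.

Fixpoint aev (R : realType) (T : Type) (o : Lops T) (d : T -> T -> R)
  (f : aform R) (v : nat -> T) : R :=
  match f with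
  | AOne => 1
  | ADist t1 t2 => d (tev o v t1) (tev o v t2)
  | APlus f g => aev o d f v + aev o d g v
  | AScale r f => r * aev o d f v
  | ASup n f => sup [set aev o d f (upd v n a) | a in [set: T]]
  | AInf n f => inf [set aev o d f (upd v n a) | a in [set: T]]
  end.

Fixpoint afv (R : realType) (f : aform R) : seq nat :=
  match f with
  | AOne => [::]
  | ADist t1 t2 => tfv t1 ++ tfv t2
  | APlus f g => afv f ++ afv g
  | AScale _ f => afv f
  | ASup n f | AInf n f => [seq k <- afv f | k != n]
  end.

Definition aclosed (R : realType) (f : aform R) : bool := afv f == [::].

Definition acond (R : realType) := (aform R * aform R)%type.

Definition cond_closed (R : realType) (c : acond R) : bool :=
  aclosed c.1 && aclosed c.2.

Definition cond_holds (R : realType) (T : Type) (o : Lops T) (d : T -> T -> R)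
  (c : acond R) : Prop :=
  forall v : nat -> T, aev o d c.1 v <= aev o d c.2 v.

Definition lip2 (R : realType) (T : Type) (d : T -> T -> R) (f : T -> T -> T) :=
  forall x x' y y', d (f x y) (f x' y') <= Num.max (d x x') (d y y').

Record Lstruct (R : realType) := MkLstruct {
  car : Type;
  ops : Lops car;
  dist : car -> car -> R;
  dist_ge0 : forall x y, 0 <= dist x y;
  dist_le1 : forall x y, dist x y <= 1;
  dist_eq0 : forall x y, dist x y = 0 <-> x = y;
  dist_sym : forall x y, dist x y = dist y x;
  dist_tri : forall x y z, dist x z <= dist x y + dist y z;
  dist_complete : forall u : nat -> car,
    (forall e : R, 0 < e -> exists N : nat, forall m n : nat,
        (N <= m)%N -> (N <= n)%N -> dist (u m) (u n) < e) ->
    exists l : car, forall e : R, 0 < e -> exists N : nat, forall n : nat,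
        (N <= n)%N -> dist (u n) l < e;
  lip_add : lip2 dist (op_add ops);
  lip_mul : lip2 dist (op_mul ops);
  lip_meet : lip2 dist (op_meet ops);
  lip_join : lip2 dist (op_join ops) }.

Inductive foform :=
| FEq of term & term
| FBot
| FImp of foform & foform
| FAll of nat & foform.

Fixpoint fsat (T : Type) (o : Lops T) (p : foform) (v : nat -> T) : Prop :=
  match p with
  | FEq t1 t2 => tev o v t1 = tev o v t2
  | FBot => False
  | FImp p q => fsat o p v -> fsat o q v
  | FAll n p => forall a : T, fsat o p (upd v n a)
  end.

(* N (with operations o) is a model of first-order Peano arithmetic in L:
   the usual axioms for 0, successor x+1, +, ., the full induction schema
   (over all L-formulas, with parameters), and the axioms saying that
   /\ and \/ are min and max for the order  x <= y <-> exists z, x + z = y. *)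
Definition PA_model (T : Type) (o : Lops T) : Prop :=
  let add := op_add o in let mul := op_mul o in
  let z0 := op_zero o in let one := op_one o in
  (forall x, add x one <> z0) /\
      (forall x y, add x one = add y one -> x = y) /\
      (forall x, add x z0 = x) /\
      (forall x y, add x (add y one) = add (add x y) one) /\
      (forall x, mul x z0 = z0) /\
      (forall x y, mul x (add y one) = add (mul x y) x) /\
      (forall x y, (exists z, add x z = y) ->
          op_meet o x y = x /\ op_join o x y = y) /\
      (forall x y, (exists z, add y z = x) ->
          op_meet o x y = y /\ op_join o x y = x) /\
      (forall (p : foform) (n : nat) (v : nat -> T),
          fsat o p (upd v n z0) ->
          (forall a, fsat o p (upd v n a) -> fsat o p (upd v n (add a one))) ->
          forall a, fsat o p (upd v n a)).

Definition discrete_dist (R : realType) (T : Type) (d : T -> T -> R) : Prop :=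
  forall x y, (x = y -> d x y = 0) /\ (x <> y -> d x y = 1).

Definition AA (R : realType) (c : acond R) : Prop :=
  cond_closed c /\
  forall (N : Type) (o : Lops N) (d : N -> N -> R),
    PA_model o -> discrete_dist d -> cond_holds o d c.

Definition modelAA (R : realType) (M : Lstruct R) : Prop :=
  forall c : acond R, AA c -> cond_holds (ops M) (@dist R M) c.

Definition Mle (R : realType) (M : Lstruct R) (x y : car M) : Prop :=
  op_meet (ops M) x y = x.
Definition Mlt (R : realType) (M : Lstruct R) (x y : car M) : Prop :=
  Mle x y /\ x <> y.

(* assignment for phi(x, y_1..y_m): variable 0 := x, variable i+1 := b i;
   the remaining variables get an irrelevant default value *)
Definition tenv (R : realType) (M : Lstruct R) (m : nat) (x : car M)
  (b : 'I_m -> car M) : nat -> car M :=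
  fun k => match k with
           | 0 => x
           | k'.+1 => match @insub nat (fun j => (j < m)%N) 'I_m k' with
                      | Some i => b i
                      | None => op_zero (ops M)
                      end
           end.

(* assignment for psi(x_1..x_m, y, p_0, p_1, ...):
   variable i < m := b i, variable m := y, variable m+1+j := parameter p j *)
Definition denv (R : realType) (M : Lstruct R) (m : nat) (b : 'I_m -> car M)
  (y : car M) (p : nat -> car M) : nat -> car M :=
  fun k => match @insub nat (fun j => (j < m)%N) 'I_m k with
           | Some i => b i
           | None => if k == m then y else p (k - m.+1)%N
           end.

(* f : M^m -> M is definable: (b, y) |-> d(f b, y) is a uniform limit on
   M^(m+1) of interpretations of affine formulas with parameters in M *)
Definition definable (R : realType) (M : Lstruct R) (m : nat)
  (f : ('I_m -> car M) -> car M) : Prop :=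
  forall e : R, 0 < e ->
    exists (psi : aform R) (p : nat -> car M),
      forall (b : 'I_m -> car M) (y : car M),
        `| dist (f b) y - aev (ops M) (@dist R M) psi (denv b y p) | <= e.

(* Main.v *)
Require Import Defs.
From HB Require Import structures.
From mathcomp Require Import all_boot all_order all_algebra.
From mathcomp Require Import boolp classical_sets reals.
From mathcomp Require Import ring lra zify.
Import Order.TTheory GRing.Theory Num.Theory.
Local Open Scope ring_scope.
Local Open Scope classical_set_scope.
Set Implicit Arguments. Unset Strict Implicit. Unset Printing Implicit Defensive.
Lemma NNP (P : Prop) : ~ ~ P -> P. Proof. by move=> h; apply/not_notP. Qed.
Ltac gen_aev := repeat match goal with
 | H : context [aev ?o ?d ?f ?v] |- _ => let x := fresh "ae" in set x := aev o d f v in *; clearbody x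
 | |- context [aev ?o ?d ?f ?v] => let x := fresh "ae" in set x := aev o d f v in *; clearbody x
 end.
Ltac slra := gen_aev; repeat match goal with x := _ |- _ => clearbody x end; lra.
Section SupImg.
Variables (R : realType) (T : Type) (F : T -> R).

Lemma supI_ub B : (forall a, F a <= B) -> forall a0, F a0 <= sup [set F a | a in [set: T]].
Proof.
move=> hB a0; apply: ub_le_sup; last by exists a0.
by exists B => _ [a _ <-].
Qed.

Lemma supI_le (t0 : T) c : (forall a, F a <= c) -> sup [set F a | a in [set: T]] <= c.
Proof.
move=> hc; apply: ge_sup; first by exists (F t0), t0.
by move=> _ [a _ <-].
Qed.

Lemma infI_lb B : (forall a, B <= F a) -> forall a0, inf [set F a | a in [set: T]] <= F a0.
Proof.
move=> hB a0; apply: ge_inf; last by exists a0.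
by exists B => _ [a _ <-].
Qed.

Lemma infI_ge (t0 : T) c : (forall a, c <= F a) -> c <= inf [set F a | a in [set: T]].
Proof.
move=> hc; apply: lb_le_inf; first by exists (F t0), t0.
by move=> _ [a _ <-].
Qed.

Lemma infI_approx B (t0 : T) eps : (forall a, B <= F a) -> 0 < eps ->
  exists a, F a < inf [set F a | a in [set: T]] + eps.
Proof.
move=> hB he; have [] := @inf_adherent R [set F a | a in [set: T]] eps he.
  split; first by exists (F t0), t0.
  by exists B => _ [a _ <-].
by move=> _ [a _ <-] h; exists a.
Qed.

Lemma supI_eq (t0 : T) c : (forall a, F a <= c) -> (exists a, F a = c) ->
  sup [set F a | a in [set: T]] = c.
Proof.
move=> h [a ha]; apply/le_anti; rewrite supI_le //= -ha; exact: supI_ub h a.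
Qed.

Lemma infI_eq (t0 : T) c : (forall a, c <= F a) -> (exists a, F a = c) ->
  inf [set F a | a in [set: T]] = c.
Proof.
move=> h [a ha]; apply/le_anti; rewrite (infI_ge t0 h) andbT -ha; exact: infI_lb h a.
Qed.
End SupImg.

Lemma set_img_ext (R : realType) T (F G : T -> R) : (forall a, F a = G a) ->
  [set F a | a in [set: T]] = [set G a | a in [set: T]].
Proof. by move=> h; congr image; apply: funext. Qed.

Section Upd.
Variable T : Type.
Lemma upd_same (v : nat -> T) n a b : upd (upd v n a) n b = upd v n b.
Proof. by apply: funext => k; rewrite /upd; case: eqP. Qed.
Lemma upd_id (v : nat -> T) n : upd v n (v n) = v.
Proof. by apply: funext => k; rewrite /upd; case: eqP => // ->. Qed.
Lemma upd_comm (v : nat -> T) n k a b : n != k -> upd (upd v n a) k b = upd (upd v k b) n a.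
Proof.
move=> nk; apply: funext => j; rewrite /upd; case: eqP => // ->.
by rewrite eq_sym (negbTE nk).
Qed.
Lemma upd_eq (v : nat -> T) n a : upd v n a n = a.
Proof. by rewrite /upd eqxx. Qed.
Lemma upd_neq (v : nat -> T) n k a : k != n -> upd v n a k = v k.
Proof. by rewrite /upd => /negbTE ->. Qed.
End Upd.

Lemma tev_agree T (o : Lops T) (v w : nat -> T) t :
  (forall k, k \in tfv t -> v k = w k) -> tev o v t = tev o w t.
Proof.
elim: t => [n|||a iha b ihb|a iha b ihb|a iha b ihb|a iha b ihb] //= h;
  try (by apply: h; rewrite inE);
  by rewrite iha ?ihb // => k hk; apply: h; rewrite mem_cat hk ?orbT.
Qed.

Lemma aev_agree (R : realType) T (o : Lops T) (d : T -> T -> R) f (v w : nat -> T) :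
  (forall k, k \in afv f -> v k = w k) -> aev o d f v = aev o d f w.
Proof.
elim: f v w => [|t1 t2|f ihf g ihg|r f ihf|n f ihf|n f ihf] v w //= h.
- by rewrite !(@tev_agree _ _ v w) // => k hk; apply: h; rewrite mem_cat hk ?orbT.
- by rewrite (ihf v w) ?(ihg v w) // => k hk; apply: h; rewrite mem_cat hk ?orbT.
- by rewrite (ihf v w).
- congr sup; apply: set_img_ext => a; apply: ihf => k hk.
  rewrite /upd; case: eqP => // /eqP kn; apply: h; by rewrite mem_filter kn.
- congr inf; apply: set_img_ext => a; apply: ihf => k hk.
  rewrite /upd; case: eqP => // /eqP kn; apply: h; by rewrite mem_filter kn.
Qed.

Lemma aev_upd_fresh (R : realType) T (o : Lops T) (d : T -> T -> R) f v k a :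
  k \notin afv f -> aev o d f (upd v k a) = aev o d f v.
Proof.
move=> hk; apply: aev_agree => j hj; rewrite /upd; case: eqP => // ejk.
by move: hk; rewrite -ejk hj.
Qed.

Fixpoint bnd (R : realType) (f : aform R) : R :=
  match f with
  | AOne => 1
  | ADist _ _ => 1
  | APlus f g => bnd f + bnd g
  | AScale r f => `|r| * bnd f
  | ASup _ f => bnd f
  | AInf _ f => bnd f
  end.

Lemma aev_bnd (R : realType) T (o : Lops T) (d : T -> T -> R) :
  (forall x y, 0 <= d x y <= 1) -> forall f v, `|aev o d f v| <= bnd f.
Proof.
move=> hd; elim => [|t1 t2|f ihf g ihg|r f ihf|n f ihf|n f ihf] v //=.
- by rewrite normr1.
- by case/andP: (hd (tev o v t1) (tev o v t2)) => h0 h1; rewrite ger0_norm.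
- by apply: (le_trans (ler_normD _ _)); apply: lerD.
- by rewrite normrM ler_wpM2l.
- have h a : - bnd f <= aev o d f (upd v n a) <= bnd f by rewrite -ler_norml.
  rewrite ler_norml; apply/andP; split.
  + apply: le_trans (supI_ub (fun a => (andP (h a)).2) (op_zero o)).
    by case/andP: (h (op_zero o)).
  + by apply: (supI_le (op_zero o)) => a; case/andP: (h a).
- have h a : - bnd f <= aev o d f (upd v n a) <= bnd f by rewrite -ler_norml.
  rewrite ler_norml; apply/andP; split.
  + by apply: (infI_ge (op_zero o)) => a; case/andP: (h a).
  + apply: le_trans (infI_lb (fun a => (andP (h a)).1) (op_zero o)) _.
    by case/andP: (h (op_zero o)).
Qed.
Lemma finmax (R : realType) (s : seq R) (P : R -> Prop) :
  (exists x, P x) -> (forall x, P x -> x \in s) -> exists x, P x /\ forall y, P y -> y <= x.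
Proof.
elim: s P => [|c s ih] P [x0 Px0] hs; first by move: (hs _ Px0).
have [[x1 [Px1 nx1]]|nP] := pselect (exists x, P x /\ x <> c).
- have h1 : exists x, P x /\ x <> c by exists x1.
  have h2 : forall x, P x /\ x <> c -> x \in s.
    by move=> x [Px xc]; move: (hs _ Px); rewrite inE; case/orP=> // /eqP /xc.
  have [x [[Px xc] hx]] := ih (fun x => P x /\ x <> c) h1 h2.
  have [Pc|nPc] := pselect (P c).
    * exists (Num.max x c); split; first by case: (leP x c).
      move=> y Py; have [->|yc] := pselect (y = c); first by rewrite le_max lexx orbT.
      by rewrite le_max hx.
    * exists x; split=> // y Py; apply: hx; split=> // yc; apply: nPc; by rewrite -yc.
- exists c; have Pc : P c.
    by apply: NNP => nPc; apply: nP; exists x0; split=> // e; apply: nPc; rewrite -e.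
  split=> // y Py; have [->|yc] := pselect (y = c) => //.
  by exfalso; apply: nP; exists y.
Qed.

Lemma finmin (R : realType) (s : seq R) (P : R -> Prop) :
  (exists x, P x) -> (forall x, P x -> x \in s) -> exists x, P x /\ forall y, P y -> x <= y.
Proof.
move=> [x0 Px0] hs.
have h1 : exists x, P (- x) by exists (- x0); rewrite opprK.
have h2 : forall x, P (- x) -> x \in map -%R s by move=> x Px; rewrite -(opprK x) map_f // hs.
have [x [Px hx]] := @finmax R (map -%R s) (fun x => P (- x)) h1 h2.
exists (- x); split=> // y Py; rewrite lerNl; apply: hx; by rewrite opprK.
Qed.

Section FinSup.
Variables (R : realType) (T : Type) (t0 : T) (F : T -> R) (s : seq R).
Hypothesis hs : forall a, F a \in s.

Lemma fin_sup_attained : exists a, F a = sup [set F a | a in [set: T]] /\ forall a', F a' <= F a.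
Proof.
have h1 : exists x, exists a, F a = x by exists (F t0), t0.
have h2 : forall x, (exists a, F a = x) -> x \in s by move=> _ [a <-].
have [x [[a <-] hx]] := @finmax R s (fun x => exists a, F a = x) h1 h2.
exists a; split=> //; last by move=> a'; apply: hx; exists a'.
by apply/esym/(supI_eq t0) => [a'|]; [apply: hx; exists a'|exists a].
Qed.

Lemma fin_supE c : sup [set F a | a in [set: T]] = c <-> (exists a, F a = c) /\ forall a, F a <= c.
Proof.
split.
- have [a [ha hmax]] := fin_sup_attained => <-; split; first by exists a.
  by move=> a'; rewrite -ha hmax.
- by case=> ex hle; apply: (supI_eq t0).
Qed.

Lemma fin_inf_attained : exists a, F a = inf [set F a | a in [set: T]] /\ forall a', F a <= F a'.
Proof.
have h1 : exists x, exists a, F a = x by exists (F t0), t0.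
have h2 : forall x, (exists a, F a = x) -> x \in s by move=> _ [a <-].
have [x [[a <-] hx]] := @finmin R s (fun x => exists a, F a = x) h1 h2.
exists a; split=> //; last by move=> a'; apply: hx; exists a'.
by apply/esym/(infI_eq t0) => [a'|]; [apply: hx; exists a'|exists a].
Qed.

Lemma fin_infE c : inf [set F a | a in [set: T]] = c <-> (exists a, F a = c) /\ forall a, c <= F a.
Proof.
split.
- have [a [ha hmin]] := fin_inf_attained => <-; split; first by exists a.
  by move=> a'; rewrite -ha hmin.
- by case=> ex hle; apply: (infI_eq t0).
Qed.
End FinSup.

Fixpoint Vals (R : realType) (f : aform R) : seq R :=
  match f with
  | AOne => [:: 1]
  | ADist _ _ => [:: 0; 1]
  | APlus f g => [seq x + y | x <- Vals f, y <- Vals g]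
  | AScale r f => [seq r * x | x <- Vals f]
  | ASup _ f => Vals f
  | AInf _ f => Vals f
  end.

Section Discrete.
Variables (R : realType) (T : Type) (o : Lops T) (d : T -> T -> R).
Hypothesis hd : discrete_dist d.

Lemma dd_eq x : d x x = 0. Proof. by case: (hd x x) => h _; apply: h. Qed.
Lemma dd_neq x y : x <> y -> d x y = 1. Proof. by case: (hd x y) => _ h; apply: h. Qed.
Lemma dd_01 x y : 0 <= d x y <= 1.
Proof. by have [->|ne] := pselect (x = y); [rewrite dd_eq lexx ler01|rewrite dd_neq // ler01 lexx]. Qed.
Lemma dd_sym x y : d x y = d y x.
Proof.
have [->|ne] := pselect (x = y); first by [].
by rewrite !dd_neq // => e; apply: ne.
Qed.
Lemma dd_tri x y z : d x z <= d x y + d y z.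
Proof.
have [->|ne] := pselect (x = z); first by rewrite dd_eq addr_ge0 // (andP (dd_01 _ _)).1.
rewrite dd_neq //; have [exy|nxy] := pselect (x = y).
  by rewrite exy dd_eq add0r dd_neq // -exy.
by rewrite dd_neq // lerDl (andP (dd_01 _ _)).1.
Qed.

Lemma Vals_mem f v : aev o d f v \in Vals f.
Proof.
elim: f v => [|t1 t2|f ihf g ihg|r f ihf|n f ihf|n f ihf] v /=.
- by rewrite inE.
- have [->|ne] := pselect (tev o v t1 = tev o v t2); first by rewrite dd_eq inE eqxx.
  by rewrite dd_neq // !inE eqxx orbT.
- by apply: allpairs_f.
- by apply: map_f.
- by have [a [<- _]] := @fin_sup_attained R T (op_zero o) _ _ (fun a => ihf (upd v n a)).
- by have [a [<- _]] := @fin_inf_attained R T (op_zero o) _ _ (fun a => ihf (upd v n a)).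
Qed.
End Discrete.

Definition FNot p := FImp p FBot.
Definition FTrue := FImp FBot FBot.
Definition FOr p q := FImp (FNot p) q.
Definition FAnd p q := FNot (FImp p (FNot q)).
Definition FEx n p := FNot (FAll n (FNot p)).
Fixpoint bigOr (l : seq foform) : foform :=
  match l with [::] => FBot | p :: l => FOr p (bigOr l) end.

Section FSat.
Variables (T : Type) (o : Lops T).
Lemma fsat_not p v : fsat o (FNot p) v <-> ~ fsat o p v. Proof. by []. Qed.
Lemma fsat_true v : fsat o FTrue v. Proof. by []. Qed.
Lemma fsat_or p q v : fsat o (FOr p q) v <-> fsat o p v \/ fsat o q v.
Proof.
rewrite /=; split=> [h|[h|h] //]; have [hp|hp] := pselect (fsat o p v); by [left|right; apply: h].
Qed.
Lemma fsat_and p q v : fsat o (FAnd p q) v <-> fsat o p v /\ fsat o q v.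
Proof.
rewrite /=; split=> [h|[hp hq] h]; last by apply: h.
split; apply: NNP => n; apply: h => // hp; by [].
Qed.
Lemma fsat_ex n p v : fsat o (FEx n p) v <-> exists a, fsat o p (upd v n a).
Proof.
rewrite /=; split=> [h|[a ha] h]; last by apply: (h a).
apply: NNP => ne; apply: h => a ha; apply: ne; by exists a.
Qed.
Lemma fsat_bigOr (A : eqType) (F : A -> foform) (l : seq A) v :
  fsat o (bigOr (map F l)) v <-> exists2 x, x \in l & fsat o (F x) v.
Proof.
elim: l => [|x l ih]; first by split=> //= -[].
have -> : bigOr (map F (x :: l)) = FOr (F x) (bigOr (map F l)) by [].
rewrite fsat_or ih; split.
- by case=> [h|[y hy h]]; [exists x; rewrite ?inE ?eqxx|exists y; rewrite ?inE ?hy ?orbT].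
- by case=> y; rewrite inE; case/orP=> [/eqP ->|hy] h; [left|right; exists y].
Qed.
End FSat.

Fixpoint Etr (R : realType) (f : aform R) (c : R) : foform :=
  match f with
  | AOne => if c == 1 then FTrue else FBot
  | ADist t1 t2 => if c == 0 then FEq t1 t2 else if c == 1 then FNot (FEq t1 t2) else FBot
  | APlus f g => bigOr [seq FAnd (Etr f x) (Etr g (c - x)) | x <- Vals f]
  | AScale r f => bigOr [seq Etr f x | x <- Vals f & r * x == c]
  | ASup n f => FAnd (FEx n (Etr f c)) (FAll n (bigOr [seq Etr f x | x <- Vals f & x <= c]))
  | AInf n f => FAnd (FEx n (Etr f c)) (FAll n (bigOr [seq Etr f x | x <- Vals f & c <= x]))
  end.

Section Etrans.
Variables (R : realType) (T : Type) (o : Lops T) (d : T -> T -> R).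
Hypothesis hd : discrete_dist d.

Lemma Etr_correct f v c : fsat o (Etr f c) v <-> aev o d f v = c.
Proof.
elim: f v c => [|t1 t2|f ihf g ihg|r f ihf|n f ihf|n f ihf] v c.
- rewrite /=; case: (c =P 1) => [->|nc]; first by split => // _; apply: fsat_true.
  by split=> // h; apply: nc.
- rewrite /Etr; have [e|ne] := pselect (tev o v t1 = tev o v t2).
  + rewrite /= e (dd_eq hd); case: (c =P 0) => [->|c0]; first by split.
    case: (c =P 1) => [->|c1].
      split=> [h|h]; first by exfalso; apply: h.
      by move/eqP: h; rewrite eq_sym oner_eq0.
    by split=> // h; apply: c0.
  + rewrite /= (dd_neq hd ne); case: (c =P 0) => [->|c0].
      split=> [h|h]; first by exfalso; apply: ne.
      by move/eqP: h; rewrite oner_eq0.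
    case: (c =P 1) => [->|c1]; first by split.
    by split=> // h; apply: c1.
- rewrite /Etr -/Etr fsat_bigOr /=; split.
  + case=> x _ /fsat_and [/ihf hf /ihg hg]; by rewrite hf hg addrC subrK.
  + move=> h; exists (aev o d f v); first exact: Vals_mem.
    apply/fsat_and; split; [exact/ihf|apply/ihg]; by rewrite -h addrC addKr.
- rewrite /Etr -/Etr fsat_bigOr /=; split.
  + by case=> x; rewrite mem_filter => /andP [/eqP <- _] /ihf ->.
  + move=> h; exists (aev o d f v); last exact/ihf.
    by rewrite mem_filter h eqxx Vals_mem.
- rewrite /Etr -/Etr fsat_and fsat_ex /= (fin_supE (op_zero o) (fun a => @Vals_mem R T o d hd f (upd v n a))).
  split.
  + case=> [[a /ihf ha] hall]; split; first by exists a.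
    move=> a'; have [x] := (fsat_bigOr _ _ _ _).1 (hall a').
    by rewrite mem_filter => /andP [hx _] /ihf ->.
  + case=> [[a ha] hall]; split; first by exists a; apply/ihf.
    move=> a'; apply/fsat_bigOr; exists (aev o d f (upd v n a')); last exact/ihf.
    by rewrite mem_filter hall Vals_mem.
- rewrite /Etr -/Etr fsat_and fsat_ex /= (fin_infE (op_zero o) (fun a => @Vals_mem R T o d hd f (upd v n a))).
  split.
  + case=> [[a /ihf ha] hall]; split; first by exists a.
    move=> a'; have [x] := (fsat_bigOr _ _ _ _).1 (hall a').
    by rewrite mem_filter => /andP [hx _] /ihf ->.
  + case=> [[a ha] hall]; split; first by exists a; apply/ihf.
    move=> a'; apply/fsat_bigOr; exists (aev o d f (upd v n a')); last exact/ihf.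
    by rewrite mem_filter hall Vals_mem.
Qed.
End Etrans.
Section PA.
Variables (T : Type) (o : Lops T).
Hypothesis hPA : PA_model o.
Local Notation add := (op_add o).
Local Notation z0 := (op_zero o).
Local Notation one := (op_one o).
Local Notation meet := (op_meet o).

Lemma pa_succ0 x : add x one <> z0. Proof. by move: hPA; rewrite /PA_model => -[h _]; apply: h. Qed.
Lemma pa_inj x y : add x one = add y one -> x = y. Proof. by move: hPA; rewrite /PA_model => -[_ [h _]]; apply: h. Qed.
Lemma pa_add0 x : add x z0 = x. Proof. by move: hPA; rewrite /PA_model => -[_ [_ [h _]]]; apply: h. Qed.
Lemma pa_addS x y : add x (add y one) = add (add x y) one. Proof. by move: hPA; rewrite /PA_model => -[_ [_ [_ [h _]]]]; apply: h. Qed.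
Lemma pa_meet1 x y : (exists z, add x z = y) -> meet x y = x.
Proof. by move: hPA; rewrite /PA_model => -[_ [_ [_ [_ [_ [_ [h _]]]]]]] /h []. Qed.
Lemma pa_meet2 x y : (exists z, add y z = x) -> meet x y = y.
Proof. by move: hPA; rewrite /PA_model => -[_ [_ [_ [_ [_ [_ [_ [h _]]]]]]]] /h []. Qed.
Lemma pa_ind (P : T -> Prop) p n v : (forall a, fsat o p (upd v n a) <-> P a) ->
  P z0 -> (forall a, P a -> P (add a one)) -> forall a, P a.
Proof.
move: hPA; rewrite /PA_model => -[_ [_ [_ [_ [_ [_ [_ [_ h]]]]]]]] hp h0 hS a.
apply/hp; apply: h; first exact/hp.
by move=> b /hp /hS /hp.
Qed.

Lemma pa_zs z : z = z0 \/ exists w, z = add w one.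
Proof.
pose p := FOr (FEq (TVar 0) TZero) (FEx 1 (FEq (TVar 0) (TAdd (TVar 1) TOne))).
apply: (@pa_ind (fun z => z = z0 \/ exists w, z = add w one) p 0 (fun _ => z0)) => [a||a _].
- by rewrite /p fsat_or fsat_ex /= /upd /=.
- by left.
- by right; exists a.
Qed.

Lemma pa_0add x : add z0 x = x.
Proof.
pose p := FEq (TAdd TZero (TVar 0)) (TVar 0).
apply: (@pa_ind (fun x => add z0 x = x) p 0 (fun _ => z0)) => [a||a ih].
- by rewrite /p /= /upd /=.
- exact: pa_add0.
- by rewrite pa_addS ih.
Qed.

Lemma pa_Sadd y w : add (add y one) w = add (add y w) one.
Proof.
pose p := FEq (TAdd (TAdd (TVar 1) TOne) (TVar 0)) (TAdd (TAdd (TVar 1) (TVar 0)) TOne).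
apply: (@pa_ind (fun w => add (add y one) w = add (add y w) one) p 0 (fun _ => y)) w => [a||a ih].
- by rewrite /p /= /upd /=.
- by rewrite !pa_add0.
- by rewrite !pa_addS ih.
Qed.

Definition pale x y := exists z, add x z = y.

Lemma pale_refl x : pale x x. Proof. by exists z0; rewrite pa_add0. Qed.

Lemma pa_total x y : pale x y \/ pale y x.
Proof.
pose le t s := FEx 2 (FEq (TAdd t (TVar 2)) s).
pose p := FOr (le (TVar 1) (TVar 0)) (le (TVar 0) (TVar 1)).
apply: (@pa_ind (fun y => pale x y \/ pale y x) p 0 (fun _ => x)) y => [a||a ih].
- by rewrite /p fsat_or !fsat_ex /= /upd /=.
- by right; exists x; rewrite pa_0add.
- case: ih => [[z hz]|[z hz]].
  + by left; exists (add z one); rewrite pa_addS hz.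
  + case: (pa_zs z) => [ez|[w ew]].
    * by left; exists one; rewrite -hz ez pa_add0.
    * by right; exists w; rewrite -hz ew pa_addS pa_Sadd.
Qed.

Lemma pale_antisym x y : pale x y -> pale y x -> x = y.
Proof. by move=> h1 h2; rewrite -(pa_meet1 h1) (pa_meet2 h2). Qed.

Lemma pale_meet x y : pale x y -> meet x y = x /\ meet y x = x.
Proof. by move=> h; split; [exact: pa_meet1|exact: pa_meet2]. Qed.

Lemma pa_meetC x y : meet x y = meet y x.
Proof.
case: (pa_total x y) => h; first by rewrite (pa_meet1 h) (pa_meet2 h).
by rewrite (pa_meet1 h) (pa_meet2 h).
Qed.

Lemma pa_meet_le x y : meet x y = x <-> pale x y.
Proof.
split=> [h|]; last exact: pa_meet1.
case: (pa_total x y) => // h'; rewrite (pa_meet2 h') in h; rewrite h; exact: pale_refl.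
Qed.

Lemma pa_meet_or x y : meet x y = x \/ meet x y = y.
Proof. by case: (pa_total x y) => h; [left; apply: pa_meet1|right; apply: pa_meet2]. Qed.

Lemma pa_meetA2 x y : meet (meet x y) y = meet x y.
Proof.
case: (pa_total x y) => h.
- by rewrite (pa_meet1 h); apply: pa_meet1 h.
- by rewrite (pa_meet2 h); apply: pa_meet1 (pale_refl y).
Qed.

Lemma pale0 x : pale x z0 -> x = z0.
Proof.
case=> z; case: (pa_zs z) => [->|[w ->]]; first by rewrite pa_add0.
by rewrite pa_addS => /pa_succ0.
Qed.

Lemma paleS x n : pale x (add n one) -> pale x n \/ x = add n one.
Proof.
case=> z; case: (pa_zs z) => [->|[w ->]]; first by rewrite pa_add0; right.
by rewrite pa_addS => /pa_inj <-; left; exists w.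
Qed.

Lemma pa_0le x : pale z0 x. Proof. by exists x; rewrite pa_0add. Qed.

Lemma pa_lnp (q : foform) (N Z : nat) (v : nat -> T) :
  N != 0%N -> Z != 0%N -> Z != N ->
  (forall w a, fsat o q (upd w N a) <-> fsat o q w) ->
  (exists x, fsat o q (upd v 0 x)) ->
  exists x, fsat o q (upd v 0 x) /\ forall y, fsat o q (upd v 0 y) -> pale x y.
Proof.
move=> N0 Z0 ZN hN [x0 hx0]; apply: NNP => hno.
pose S := FAll 0 (FImp (FEx Z (FEq (TAdd (TVar 0) (TVar Z)) (TVar N))) (FNot q)).
have hq : forall n x, fsat o q (upd (upd v N n) 0 x) <-> fsat o q (upd v 0 x).
  by move=> n x; rewrite upd_comm // hN.
have e1 : (0 == Z)%N = false by rewrite eq_sym (negbTE Z0).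
have e2 : (N == Z)%N = false by rewrite eq_sym (negbTE ZN).
have e3 : (N == 0)%N = false := negbTE N0.
have hS : forall n, fsat o S (upd v N n) <-> forall x, pale x n -> ~ fsat o q (upd v 0 x).
  move=> n; split=> h x.
  - move=> [z hz] hqx.
    have hqx' : fsat o q (upd (upd v N n) 0 x) by apply/hq.
    have hh : fsat o (FEx Z (FEq (TAdd (TVar 0) (TVar Z)) (TVar N))) (upd (upd v N n) 0 x) ->
      fsat o (FNot q) (upd (upd v N n) 0 x) := h x.
    apply: (hh _ hqx'); apply/fsat_ex; exists z => /=.
    by rewrite /upd !eqxx e1 e2 e3.
  - move=> hex hqx; have [z /= hz] := (@fsat_ex T o Z (FEq (TAdd (TVar 0) (TVar Z)) (TVar N)) (upd (upd v N n) 0 x)).1 hex.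
    have hqx' : fsat o q (upd v 0 x) by apply/(hq n).
    apply: (h x) hqx'; exists z; move: hz.
    by rewrite /upd !eqxx e1 e2 e3.
have hall : forall n x, pale x n -> ~ fsat o q (upd v 0 x).
  apply: (@pa_ind _ S N v hS) => [x /pale0 -> hq0|n ih x].
  - apply: hno; exists z0; split=> // y _; exact: pa_0le.
  - case/paleS => [/ih //|-> hqn]; apply: hno; exists (add n one); split=> // y hy.
    case: (pa_total (add n one) y) => // /paleS [/ih //|->]; exact: pale_refl.
exact: (hall x0 x0 (pale_refl x0) hx0).
Qed.
End PA.
Arguments ADist {R} _ _.
Section Consts.
Variables (R : realType) (phi : aform R).
Definition Cb : R := foldr (fun x acc => Num.max `|x| acc) 0 (Vals phi).
Definition Dl : seq R := [seq z <- allpairs (fun x y => `|x - y|) (Vals phi) (Vals phi) | 0 < z].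
Definition del : R := foldr Num.min 1 Dl.
Definition KK : R := del^-1 + 1.
Definition K2 : R := 2 * Cb + 1.
Definition K3 : R := (2 * Cb + del + 1) * (del^-1 + 1).

Lemma Cb_ge0 : 0 <= Cb.
Proof. rewrite /Cb; elim: (Vals phi) => //= x s ih; by rewrite le_max ih orbT. Qed.

Lemma Cb_bound x : x \in Vals phi -> `|x| <= Cb.
Proof.
rewrite /Cb; elim: (Vals phi) => //= y s ih; rewrite inE => /orP [/eqP ->|hx].
- by rewrite le_max lexx.
- by rewrite le_max ih ?orbT.
Qed.

Lemma del_gt0 : 0 < del.
Proof.
have : all (fun z => 0 < z) Dl by apply/allP => z; rewrite mem_filter => /andP [].
rewrite /del; elim: Dl => //= z s ih /andP [hz hs]; by rewrite lt_min hz ih.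
Qed.

Lemma del_le x y : x \in Vals phi -> y \in Vals phi -> x != y -> del <= `|x - y|.
Proof.
move=> hx hy nxy; have : `|x - y| \in Dl.
  by rewrite mem_filter normr_gt0 subr_eq0 nxy /=; apply: allpairs_f.
rewrite /del; elim: Dl => //= z s ih; rewrite inE => /orP [/eqP ->|h].
- by rewrite ge_min lexx.
- by rewrite ge_min ih ?orbT.
Qed.

Lemma gap x y : x \in Vals phi -> y \in Vals phi -> x < y -> x + del <= y.
Proof.
move=> hx hy lxy; have := del_le hx hy (negbT (lt_eqF lxy)).
by rewrite distrC gtr0_norm ?subr_gt0 // lerBrDr addrC.
Qed.

Lemma KK_ge1 : 1 <= KK.
Proof. by rewrite /KK lerDr invr_ge0 ltW // del_gt0. Qed.
Lemma KK_del : 1 <= KK * del.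
Proof.
by rewrite /KK mulrDl mulVf ?gt_eqF ?del_gt0 // mul1r lerDl ltW // del_gt0.
Qed.
Lemma K2_gt : 2 * Cb < K2. Proof. by rewrite /K2 ltrDl ltr01. Qed.
Lemma K3_ge : 2 * Cb + del + 1 <= K3.
Proof.
have h0 : 0 <= 2 * Cb + del + 1.
  by rewrite !addr_ge0 // ?mulr_ge0 ?Cb_ge0 // ltW // del_gt0.
by rewrite /K3 -[leLHS]mulr1 ler_wpM2l // lerDr invr_ge0 ltW // del_gt0.
Qed.
Lemma K3_del : 2 * Cb + del + 1 <= K3 * del.
Proof.
have h0 : 0 <= 2 * Cb + del + 1.
  by rewrite !addr_ge0 // ?mulr_ge0 ?Cb_ge0 // ltW // del_gt0.
rewrite /K3 -mulrA [(_^-1 + 1) * del]mulrDl mulVf ?gt_eqF ?del_gt0 // mul1r.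
by rewrite -[leLHS]mulr1 ler_wpM2l // lerDl ltW // del_gt0.
Qed.
End Consts.

Definition AMinus (R : realType) (f g : aform R) := APlus f (AScale (-1) g).

Section Forms.
Variables (R : realType) (m : nat) (phi : aform R).
Definition vX := m.+1.
Definition vY := m.+2.
Definition vA := m.+3.
Definition Mx := ASup 0 phi.
Definition PhiS t := ASup 0 (APlus phi (AScale (- K2 phi) (ADist (TVar 0) t))).
Definition PhiI t := AInf 0 (APlus phi (AScale (K2 phi) (ADist (TVar 0) t))).
Definition Pf := ASup 0 (APlus (ADist (TMeet (TVar vX) (TVar 0)) (TVar vX))
                     (APlus (AScale (KK phi) phi) (AScale (- KK phi) Mx))).
Definition chi := APlus (AScale (KK phi) Mx)
   (AInf vX (APlus (ADist (TVar vY) (TVar vX))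
        (APlus (AScale (- KK phi) (PhiS (TVar vX))) (AScale (KK phi) Pf)))).
Definition GLip (G : aform R) k := AMinus (AMinus G (AInf k (APlus G (ADist (TVar k) (TVar vA)))))
                       (ADist (TVar k) (TVar vA)).
Definition GTri := AMinus (AMinus (ADist (TVar vY) (TVar vA)) chi)
                          (AInf vY (APlus chi (ADist (TVar vY) (TVar vA)))).
Definition GInf := AInf vY chi.
Definition G4 := AMinus (AMinus Mx (PhiI (TVar vY))) (AScale (K3 phi) chi).
Definition G5 := AMinus (AMinus (AMinus (APlus phi (AScale (del phi) (ADist (TVar 0) (TVar vY)))) Mx)
                    (AScale (K3 phi) chi))
                    (AScale (K3 phi) (ADist (TMeet (TVar 0) (TVar vY)) (TVar 0))).
Definition G6 := AMinus (AMinus (AMinus Mx (PhiI (TMeet (TVar vY) (TVar vA)))) (AScale (K3 phi) chi))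
                    (AScale (K3 phi) (AMinus Mx (PhiS (TVar vA)))).
Definition G7 : aform R := ADist (TMeet (TMeet (TVar vY) (TVar vA)) (TVar vA)) (TMeet (TVar vY) (TVar vA)).
Definition G8 : aform R := ADist (TMeet (TVar vY) (TVar vA)) (TMeet (TVar vA) (TVar vY)).
End Forms.
Arguments Mx : simpl never.
Arguments PhiS : simpl never.
Arguments PhiI : simpl never.
Arguments Pf : simpl never.
Arguments chi : simpl never.

Section AevEqs.
Variables (R : realType) (T : Type) (o : Lops T) (d : T -> T -> R).
Lemma aevP f g v : aev o d (APlus f g) v = aev o d f v + aev o d g v. Proof. by []. Qed.
Lemma aevS r f v : aev o d (AScale r f) v = r * aev o d f v. Proof. by []. Qed.
Lemma aevD t1 t2 v : aev o d (ADist t1 t2) v = d (tev o v t1) (tev o v t2). Proof. by []. Qed.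
Lemma aevM f g v : aev o d (AMinus f g) v = aev o d f v - aev o d g v.
Proof. by rewrite /AMinus aevP aevS mulN1r. Qed.
Lemma aevSup n f v : aev o d (ASup n f) v = sup [set aev o d f (upd v n a) | a in [set: T]].
Proof. by []. Qed.
Lemma aevInf n f v : aev o d (AInf n f) v = inf [set aev o d f (upd v n a) | a in [set: T]].
Proof. by []. Qed.
Lemma tevV k v : tev o v (TVar k) = v k. Proof. by []. Qed.
Lemma tevM t s v : tev o v (TMeet t s) = op_meet o (tev o v t) (tev o v s). Proof. by []. Qed.
End AevEqs.

Section PAsem.
Variables (R : realType) (T : Type) (o : Lops T) (d : T -> T -> R).
Hypothesis hd : discrete_dist d.
Hypothesis hPA : PA_model o.
Variables (m : nat) (phi : aform R).
Hypothesis hphi : all (fun k => (k <= m)%N) (afv phi).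

Local Notation ev f v := (aev o d f v).
Local Notation F v t := (aev o d phi (upd v 0 t)).
Local Notation MX v := (aev o d (Mx phi) v).
Local Notation meet := (op_meet o).

Lemma phi_fresh k v a : (m < k)%N -> ev phi (upd v k a) = ev phi v.
Proof.
move=> hk; apply: aev_upd_fresh; apply/negP => /(allP hphi); by rewrite leqNgt hk.
Qed.

Lemma MxE v : MX v = sup [set F v t | t in [set: T]].
Proof. by []. Qed.

Lemma F_upd k v a t : (k == 0)%N || (m < k)%N -> F (upd v k a) t = F v t.
Proof.
case/orP => [/eqP ->|hk]; first by rewrite upd_same.
have k0 : k != 0%N by apply/eqP => e; move: hk; rewrite e.
by rewrite upd_comm // phi_fresh.
Qed.

Lemma MX_upd k v a : (k == 0)%N || (m < k)%N -> MX (upd v k a) = MX v.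
Proof. by move=> hk; rewrite !MxE; congr sup; apply: set_img_ext => t; apply: F_upd. Qed.

Lemma F_vals v t : F v t \in Vals phi. Proof. exact: Vals_mem. Qed.
Lemma MX_vals v : MX v \in Vals phi. Proof. exact: (@Vals_mem R T o d hd (Mx phi)). Qed.
Lemma F_bnd v t : `|F v t| <= Cb phi. Proof. exact/Cb_bound/F_vals. Qed.
Lemma MX_bnd v : `|MX v| <= Cb phi. Proof. exact/Cb_bound/MX_vals. Qed.

Lemma F_le_MX v t : F v t <= MX v.
Proof.
rewrite MxE; apply: (@supI_ub _ _ (fun t => F v t) (Cb phi)) => a.
by have := F_bnd v a; rewrite ler_norml => /andP [].
Qed.

Lemma MX_attained v : exists t, F v t = MX v.
Proof.
have [t [ht _]] := @fin_sup_attained R T (op_zero o) (fun t => F v t) _ (F_vals v).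
by exists t; rewrite MxE.
Qed.

Lemma F_gap v t : F v t <> MX v -> F v t + del phi <= MX v.
Proof.
move=> ne; apply: gap; rewrite ?F_vals ?MX_vals //.
by rewrite lt_neqAle F_le_MX andbT; apply/eqP.
Qed.

Definition lm v f := F v f = MX v /\ forall z, F v z = MX v -> pale o f z.

Definition Maxim := bigOr [seq FAnd (Etr phi c) (Etr (Mx phi) c) | c <- Vals phi].

Lemma MaximE w : fsat o Maxim w <-> ev phi w = ev (Mx phi) w.
Proof.
rewrite fsat_bigOr; split.
- by case=> c _ /fsat_and [/(Etr_correct o hd) -> /(Etr_correct o hd) ->].
- move=> h; exists (ev phi w); first exact: Vals_mem.
  by apply/fsat_and; split; apply/(Etr_correct o hd).
Qed.

Lemma lm_exists v : exists f, lm v f.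
Proof.
have h0 : (0 == 0)%N || (m < 0)%N by [].
have hq x : fsat o Maxim (upd v 0 x) <-> F v x = MX v.
  by rewrite MaximE (MX_upd _ _ h0).
have hZN : m.+2 != m.+1 by rewrite eqSS neq_ltn ltnSn orbT.
have h1 : (m.+1 == 0)%N || (m < m.+1)%N by rewrite ltnSn orbT.
have hN : forall w a, fsat o Maxim (upd w m.+1 a) <-> fsat o Maxim w.
  by move=> w a; rewrite !MaximE phi_fresh // (MX_upd _ _ h1).
have hex : exists x, fsat o Maxim (upd v 0 x).
  by have [t ht] := MX_attained v; exists t; apply/hq.
have [f [hf1 hf2]] := @pa_lnp T o hPA Maxim m.+1 m.+2 v isT isT hZN hN hex.
by exists f; split; [apply/hq|move=> z /hq; apply: hf2].
Qed.

Lemma lm_upd k v a f : (k == 0)%N || (m < k)%N -> lm (upd v k a) f <-> lm v f.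
Proof.
move=> hk; rewrite /lm (MX_upd v a hk) (F_upd v a f hk); split; case=> h1 h2; split=> // z.
- by rewrite -(F_upd v a z hk); apply: h2.
- by rewrite (F_upd v a z hk); apply: h2.
Qed.

Lemma lm_meet v f z : lm v f -> F v z = MX v -> meet f z = f.
Proof. by case=> _ h /h; apply: pa_meet1. Qed.

Lemma lm_unique v f g : lm v f -> lm v g -> f = g.
Proof.
move=> [h1 h2] [h3 h4]; apply: (pale_antisym hPA); [exact: h2|exact: h4].
Qed.

Lemma lm_lt v f t : lm v f -> meet t f = t -> t <> f -> F v t + del phi <= MX v.
Proof.
move=> [h1 h2] htf ntf; apply: F_gap => ht; apply: ntf.
apply: (pale_antisym hPA); [exact/(pa_meet_le hPA)|exact: h2].
Qed.

Lemma lm_ne v f x : lm v f -> F v x = MX v -> x <> f -> meet x f <> x.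
Proof.
move=> [h1 h2] hx nxf /(pa_meet_le hPA) hle; apply: nxf.
by apply: (pale_antisym hPA) => //; apply: h2.
Qed.
Lemma d01 x y : 0 <= d x y <= 1. Proof. exact: dd_01. Qed.
Lemma d_ge0 x y : 0 <= d x y. Proof. by case/andP: (d01 x y). Qed.
Lemma d_le1 x y : d x y <= 1. Proof. by case/andP: (d01 x y). Qed.

Lemma F_bnd2 v t : - Cb phi <= F v t <= Cb phi. Proof. by rewrite -ler_norml F_bnd. Qed.
Lemma MX_bnd2 v : - Cb phi <= MX v <= Cb phi. Proof. by rewrite -ler_norml MX_bnd. Qed.

Lemma PhiS_sem t v : (forall u, tev o (upd v 0 u) t = tev o v t) ->
  ev (PhiS phi t) v = F v (tev o v t).
Proof.
move=> ht; rewrite /PhiS /=.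
have -> : [set ev (APlus phi (AScale (- K2 phi) (ADist (TVar 0) t))) (upd v 0 a) | a in [set: T]]
   = [set F v a - K2 phi * d a (tev o v t) | a in [set: T]].
  by apply: set_img_ext => a /=; rewrite ht upd_eq mulNr.
apply: (supI_eq (op_zero o)); last by exists (tev o v t); rewrite dd_eq // mulr0 subr0.
move=> a; have [->|ne] := pselect (a = tev o v t); first by rewrite dd_eq // mulr0 subr0.
rewrite (dd_neq hd ne); have := F_bnd2 v a; have := F_bnd2 v (tev o v t).
move=> /andP [h1 h2] /andP [h3 h4]; rewrite /K2; lra.
Qed.

Lemma PhiI_sem t v : (forall u, tev o (upd v 0 u) t = tev o v t) ->
  ev (PhiI phi t) v = F v (tev o v t).
Proof.
move=> ht; rewrite /PhiI /=.
have -> : [set ev (APlus phi (AScale (K2 phi) (ADist (TVar 0) t))) (upd v 0 a) | a in [set: T]]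
   = [set F v a + K2 phi * d a (tev o v t) | a in [set: T]].
  by apply: set_img_ext => a /=; rewrite ht upd_eq.
apply: (infI_eq (op_zero o)); last by exists (tev o v t); rewrite dd_eq // mulr0 addr0.
move=> a; have [->|ne] := pselect (a = tev o v t); first by rewrite dd_eq // mulr0 addr0.
rewrite (dd_neq hd ne); have := F_bnd2 v a; have := F_bnd2 v (tev o v t).
move=> /andP [h1 h2] /andP [h3 h4]; rewrite /K2; lra.
Qed.

Lemma vX0 : vX m != 0%N. Proof. by []. Qed.
Lemma vY0 : vY m != 0%N. Proof. by []. Qed.
Lemma vA0 : vA m != 0%N. Proof. by []. Qed.
Lemma vXY : vX m != vY m. Proof. rewrite /vX /vY; lia. Qed.
Lemma vXA : vX m != vA m. Proof. rewrite /vX /vA; lia. Qed.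
Lemma vYA : vY m != vA m. Proof. rewrite /vY /vA; lia. Qed.
Lemma vXf : (vX m == 0)%N || (m < vX m)%N. Proof. rewrite /vX; lia. Qed.
Lemma vYf : (vY m == 0)%N || (m < vY m)%N. Proof. rewrite /vY; lia. Qed.
Lemma vAf : (vA m == 0)%N || (m < vA m)%N. Proof. rewrite /vA; lia. Qed.
Lemma v0f : (0 == 0)%N || (m < 0)%N. Proof. by []. Qed.

Definition Pval v x := sup [set d (meet x z) x + KK phi * F v z - KK phi * MX v | z in [set: T]].

Lemma Pf_sem v : ev (Pf m phi) v = Pval v (v (vX m)).
Proof.
rewrite /Pf /Pval /=; congr sup; apply: set_img_ext => z /=.
rewrite upd_eq upd_neq ?vX0 // -!MxE (MX_upd _ _ v0f).
by rewrite mulNr addrA.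
Qed.

Lemma Pval_f v f : lm v f -> Pval v f = 0.
Proof.
move=> hf; apply: (supI_eq (op_zero o)); last first.
  exists f; have [h1 _] := hf; rewrite h1 (lm_meet hf h1) dd_eq //; lra.
move=> z; have [hz|hz] := pselect (F v z = MX v).
- rewrite (lm_meet hf hz) dd_eq // hz; lra.
- have := F_gap hz; have := KK_del phi; have := KK_ge1 phi; have := d_le1 (meet f z) f.
  move=> h1 h2 h3 h4.
  have : KK phi * del phi <= KK phi * (MX v - F v z) by rewrite ler_wpM2l //; lra.
  lra.
Qed.

Lemma Pval_term_le v x z : d (meet x z) x + KK phi * F v z - KK phi * MX v <= 1.
Proof.
have := d_le1 (meet x z) x; have := F_le_MX v z; have := KK_ge1 phi => h1 h2 h3.
have : KK phi * F v z <= KK phi * MX v by rewrite ler_wpM2l //; lra.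
lra.
Qed.

Lemma Pval_ge v x z : d (meet x z) x + KK phi * F v z - KK phi * MX v <= Pval v x.
Proof. exact: (supI_ub (Pval_term_le v x)). Qed.

Lemma Pval_ge0 v f x : lm v f -> 0 <= Pval v x.
Proof.
move=> hf; apply: le_trans (Pval_ge v x f); have [-> _] := hf.
have := d_ge0 (meet x f) x; lra.
Qed.

Lemma Pval_ne v f x : lm v f -> F v x = MX v -> x <> f -> 1 <= Pval v x.
Proof.
move=> hf hx nxf; apply: le_trans (Pval_ge v x f); have [-> _] := hf.
rewrite (dd_neq hd (lm_ne hf hx nxf)); lra.
Qed.

Lemma Pval_upd k v a x : (k == 0)%N || (m < k)%N -> Pval (upd v k a) x = Pval v x.
Proof.
move=> hk; rewrite /Pval; congr sup; apply: set_img_ext => z.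
by rewrite (F_upd _ _ _ hk) (MX_upd _ _ hk).
Qed.

Lemma chi_sem v f : lm v f -> ev (chi m phi) v = d (v (vY m)) f.
Proof.
move=> hf; rewrite /chi aevP aevS aevInf.
have -> : [set ev (APlus (ADist (TVar (vY m)) (TVar (vX m)))
            (APlus (AScale (- KK phi) (PhiS phi (TVar (vX m)))) (AScale (KK phi) (Pf m phi))))
            (upd v (vX m) a) | a in [set: T]]
   = [set d (v (vY m)) x - KK phi * F v x + KK phi * Pval v x | x in [set: T]].
  apply: set_img_ext => x.
  rewrite !aevP !aevS aevD !tevV upd_eq upd_neq; last by rewrite eq_sym vXY.
  rewrite PhiS_sem; last by move=> u; rewrite !tevV upd_neq ?vX0.
  rewrite Pf_sem tevV upd_eq (F_upd _ _ _ vXf) (Pval_upd _ _ _ vXf) mulNr.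
  by rewrite addrA.
rewrite (@infI_eq _ _ _ (op_zero o) (d (v (vY m)) f - KK phi * MX v)).
- by rewrite addrC subrK.
- move=> x; have := KK_ge1 phi; have := KK_del phi; have := d_le1 (v (vY m)) f.
  have := d_ge0 (v (vY m)) x; have := Pval_ge0 x hf; move=> h1 h2 h3 h4 h5.
  have [hx|hx] := pselect (F v x = MX v).
  + have [->|nxf] := pselect (x = f); first by have [h7 _] := hf; rewrite h7 (Pval_f hf); lra.
    have := Pval_ne hf hx nxf => h6.
    have : KK phi * 1 <= KK phi * Pval v x by rewrite ler_wpM2l //; lra.
    rewrite hx; lra.
  + have := F_gap hx => h6.
    have : KK phi * del phi <= KK phi * (MX v - F v x) by rewrite ler_wpM2l //; lra.
    have h7 : 0 <= KK phi * Pval v x by apply: mulr_ge0 => //; lra.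
    rewrite mulrBr; lra.
- exists f; have [h1 _] := hf; rewrite h1 (Pval_f hf) mulr0 addr0; done.
Qed.

Lemma chi_01 v : 0 <= ev (chi m phi) v <= 1.
Proof. have [f hf] := lm_exists v; rewrite (chi_sem hf); exact: d01. Qed.


Lemma K3_ge0 : 0 <= K3 phi.
Proof. have := K3_ge phi; have := Cb_ge0 phi; have := del_gt0 phi; lra. Qed.

Lemma GLip_PA (G : aform R) k v : k != vA m -> (forall w, 0 <= ev G w <= 1) ->
  ev (GLip m G k) v <= 0.
Proof.
move=> hk hG; rewrite /GLip !aevM aevInf aevD !tevV.
have -> : [set ev (APlus G (ADist (TVar k) (TVar (vA m)))) (upd v k a) | a in [set: T]]
   = [set ev G (upd v k a) + d a (v (vA m)) | a in [set: T]].
  apply: set_img_ext => a; rewrite aevP aevD !tevV upd_eq upd_neq //; by rewrite eq_sym.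
have g01 := hG v; case/andP: g01 => g0 g1.
have [e|ne] := pselect (v k = v (vA m)).
- rewrite e dd_eq // subr0; rewrite subr_le0; apply: (infI_ge (op_zero o)) => a.
  have [->|na] := pselect (a = v (vA m)).
    by rewrite -e upd_id dd_eq // addr0.
  rewrite (dd_neq hd na); case/andP: (hG (upd v k a)) => h _; lra.
- rewrite (dd_neq hd ne).
  have : 0 <= inf [set ev G (upd v k a) + d a (v (vA m)) | a in [set: T]].
    apply: (infI_ge (op_zero o)) => a; case/andP: (hG (upd v k a)) => h _.
    have := d_ge0 a (v (vA m)); lra.
  lra.
Qed.

Lemma chi_upd k v a : (k == 0)%N || (m < k)%N -> k != vY m ->
  ev (chi m phi) (upd v k a) = ev (chi m phi) v.
Proof.
move=> hk hkY; have [f hf] := lm_exists v.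
rewrite (chi_sem hf) (chi_sem (iffRL (lm_upd _ _ _ hk) hf)) upd_neq //; by rewrite eq_sym.
Qed.

Lemma GTri_PA v : ev (GTri m phi) v <= 0.
Proof.
have [f hf] := lm_exists v.
rewrite /GTri !aevM aevD !tevV aevInf (chi_sem hf).
have -> : [set ev (APlus (chi m phi) (ADist (TVar (vY m)) (TVar (vA m)))) (upd v (vY m) a) | a in [set: T]]
   = [set d a f + d a (v (vA m)) | a in [set: T]].
  apply: set_img_ext => a; rewrite aevP aevD !tevV upd_eq upd_neq; last by rewrite eq_sym vYA.
  by rewrite (chi_sem (iffRL (lm_upd _ _ _ vYf) hf)) upd_eq.
have : d f (v (vA m)) <= inf [set d a f + d a (v (vA m)) | a in [set: T]].
  apply: (infI_ge (op_zero o)) => a; rewrite (dd_sym hd a f); exact: dd_tri.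
have := dd_tri hd (v (vY m)) f (v (vA m)); lra.
Qed.

Lemma GInf_PA v : ev (GInf m phi) v <= 0.
Proof.
have [f hf] := lm_exists v; rewrite /GInf aevInf.
have h0 : forall a, 0 <= ev (chi m phi) (upd v (vY m) a).
  by move=> a; case/andP: (chi_01 (upd v (vY m) a)).
apply: le_trans (infI_lb h0 f) _.
by rewrite (chi_sem (iffRL (lm_upd _ _ _ vYf) hf)) upd_eq dd_eq.
Qed.

Lemma G4_PA v : ev (G4 m phi) v <= 0.
Proof.
have [f hf] := lm_exists v.
rewrite /G4 !aevM aevS (chi_sem hf) PhiI_sem; last by move=> u; rewrite !tevV upd_neq ?vY0.
rewrite tevV; have := K3_ge phi; have := del_gt0 phi; have := Cb_ge0 phi.
have [e|ne] := pselect (v (vY m) = f).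
- rewrite e dd_eq // mulr0; have [-> _] := hf; lra.
- rewrite (dd_neq hd ne) mulr1; have := F_bnd2 v (v (vY m)); have := MX_bnd2 v.
  move=> /andP [? ?] /andP [? ?]; lra.
Qed.

Lemma G5_PA v : ev (G5 m phi) v <= 0.
Proof.
have [f hf] := lm_exists v.
rewrite /G5 !aevM aevP !aevS !aevD !tevV tevM !tevV (chi_sem hf).
have ephi : ev phi v = F v (v 0) by rewrite upd_id.
rewrite ephi; have := K3_ge phi; have := del_gt0 phi; have := Cb_ge0 phi.
have := F_le_MX v (v 0); have := F_bnd2 v (v 0); have := MX_bnd2 v.
move=> /andP [? ?] /andP [? ?] ? ? ? ?.
have := d01 (v 0) (v (vY m)); have := d01 (meet (v 0) (v (vY m))) (v 0).
move=> /andP [? ?] /andP [? ?].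
have hK3 := K3_ge0.
have : 0 <= K3 phi * d (meet (v 0) (v (vY m))) (v 0) by apply: mulr_ge0.
have hdl : del phi * d (v 0) (v (vY m)) <= del phi by rewrite -[leRHS]mulr1 ler_wpM2l // ltW.
move=> ?.
have [e|ne] := pselect (v (vY m) = f); last first.
  rewrite (dd_neq hd ne) mulr1; lra.
rewrite e dd_eq // mulr0; rewrite e in hdl.
have [em|nm] := pselect (meet (v 0) f = v 0); last first.
  rewrite (dd_neq hd nm) mulr1; lra.
rewrite em dd_eq // mulr0.
have [et|nt] := pselect (v 0 = f).
  rewrite et dd_eq // mulr0; have [-> _] := hf; lra.
rewrite (dd_neq hd nt) mulr1; have := lm_lt hf em nt; lra.
Qed.

Lemma G6_PA v : ev (G6 m phi) v <= 0.
Proof.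
have [f hf] := lm_exists v.
rewrite /G6 !aevM !aevS (chi_sem hf).
rewrite PhiI_sem; last by move=> u; rewrite tevM !tevV !upd_neq ?vY0 ?vA0.
rewrite aevM PhiS_sem; last by move=> u; rewrite !tevV upd_neq ?vA0.
rewrite tevM !tevV.
set a := v (vA m); set y := v (vY m).
have := K3_ge phi; have := K3_del phi; have := del_gt0 phi; have := Cb_ge0 phi.
have := F_le_MX v a; have := F_bnd2 v (meet y a); have := MX_bnd2 v.
move=> /andP [? ?] /andP [? ?] ? ? ? ? ?.
have hK3 := K3_ge0.
have : 0 <= K3 phi * (MX v - F v a) by apply: mulr_ge0 => //; lra.
move=> ?.
have [e|ne] := pselect (y = f); last first.
  rewrite (dd_neq hd ne) mulr1; lra.
rewrite e dd_eq // mulr0.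
have [ha|ha] := pselect (F v a = MX v).
  rewrite (lm_meet hf ha); have [-> _] := hf; rewrite ha; lra.
have := F_gap ha => ?.
have : K3 phi * del phi <= K3 phi * (MX v - F v a) by rewrite ler_wpM2l //; lra.
move: (F_bnd2 v (meet f a)) => /andP [? ?]; lra.
Qed.

Lemma G7_PA v : ev (@G7 R m) v <= 0.
Proof. by rewrite /G7 aevD !tevM !tevV (pa_meetA2 hPA) dd_eq. Qed.

Lemma G8_PA v : ev (@G8 R m) v <= 0.
Proof. by rewrite /G8 aevD !tevM !tevV (pa_meetC hPA) dd_eq. Qed.
End PAsem.
Definition closeAll (R : realType) (G : aform R) := foldr (@ASup R) G (afv G).

Lemma afv_foldr (R : realType) (G : aform R) L k :
  k \in afv (foldr (@ASup R) G L) -> (k \in afv G) && (k \notin L).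
Proof.
elim: L => [|n L ih] /=; first by move=> ->.
rewrite mem_filter => /andP [kn /ih /andP [h1 h2]]; by rewrite h1 inE negb_or kn h2.
Qed.

Lemma closeAll_closed (R : realType) (G : aform R) : afv (closeAll G) = [::].
Proof.
rewrite /closeAll; case E: (afv (foldr (@ASup R) G (afv G))) => [|k s] //.
have : k \in afv (foldr (@ASup R) G (afv G)) by rewrite E inE eqxx.
by move/afv_foldr => /andP [->].
Qed.

Lemma foldr_sup_le0 (R : realType) T (o : Lops T) (d : T -> T -> R) (G : aform R) L :
  (forall w, aev o d G w <= 0) -> forall v, aev o d (foldr (@ASup R) G L) v <= 0.
Proof.
move=> hG; elim: L => [|n L ih] v //=.
by apply: (supI_le (op_zero o)) => a; apply: ih.
Qed.

Lemma foldr_sup_ge (R : realType) T (o : Lops T) (d : T -> T -> R) (G : aform R) L :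
  (forall x y, 0 <= d x y <= 1) ->
  forall v, aev o d G v <= aev o d (foldr (@ASup R) G L) v.
Proof.
move=> hd; elim: L => [|n L ih] v //=.
apply: (le_trans (ih v)).
have hb : forall a, aev o d (foldr (@ASup R) G L) (upd v n a) <= bnd (foldr (@ASup R) G L).
  by move=> a; have := aev_bnd o hd (foldr (@ASup R) G L) (upd v n a); rewrite ler_norml => /andP [].
have h := @supI_ub R T (fun a => aev o d (foldr (@ASup R) G L) (upd v n a)) _ hb (v n).
by rewrite upd_id in h.
Qed.

Lemma distM01 (R : realType) (M : Lstruct R) x y : 0 <= @dist R M x y <= 1.
Proof. by rewrite dist_ge0 dist_le1. Qed.

Lemma transfer (R : realType) (M : Lstruct R) (hM : modelAA M) (G : aform R) :
  (forall (N : Type) (o : Lops N) (d : N -> N -> R), PA_model o -> discrete_dist d ->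
     forall v, aev o d G v <= 0) ->
  forall v, aev (ops M) (@dist R M) G v <= 0.
Proof.
move=> hG v.
have hc : AA (closeAll G, AScale 0 (@AOne R)).
  split; first by rewrite /cond_closed /aclosed /= closeAll_closed.
  move=> N o d hPA hd w /=; rewrite mul0r.
  by apply: foldr_sup_le0 => w'; apply: hG.
have := hM _ hc v; rewrite /= mul0r => h.
apply: le_trans h; apply: foldr_sup_ge; exact: distM01.
Qed.

Lemma afv_chi (R : realType) m (phi : aform R) : all (fun k => (k <= m)%N) (afv phi) ->
  forall k, k \in afv (chi m phi) -> (k == vY m) || ((0 < k)%N && (k <= m)%N).
Proof.
move=> hphi k; rewrite /chi /Mx /PhiS /Pf /= /vX /vY.
have hp : forall j, j \in afv phi -> (j <= m)%N by move=> j; move/allP: hphi => h /h.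
have e1 : (m.+2 != m.+1) = true by lia.
rewrite e1 eqxx /= !(mem_cat, inE, mem_filter).
case hk: (k \in afv phi); last by rewrite /=; lia.
move: (hp k hk); lia.
Qed.
Lemma small_inv (R : realType) (e : R) : 0 < e ->
  exists N, forall n, (N <= n)%N -> (n.+1%:R : R)^-1 < e.
Proof.
move=> he; exists (Num.Def.archi_bound (e^-1)) => n hn.
have hie : (0 : R) <= e^-1 by rewrite invr_ge0 ltW.
have h1 := @archi_boundP R (e^-1) hie.
have hn1 : (0 : R) < n.+1%:R by rewrite ltr0n.
rewrite invf_plt ?posrE //.
apply: (lt_le_trans h1); rewrite ler_nat; exact: (leq_trans hn (leqnSn n)).
Qed.

Lemma metric_rep (R : realType) (M : Lstruct R) (g : car M -> R) :
  (forall e, 0 < e -> exists y, g y < e) ->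
  (forall y y', @dist R M y y' <= g y + g y') ->
  (forall y y', g y <= g y' + @dist R M y y') ->
  exists a, forall y, g y = @dist R M a y.
Proof.
move=> happ htri hlip.
have dxx y : @dist R M y y = 0 by apply/dist_eq0.
have g0 y : 0 <= g y by have := htri y y; rewrite dxx => h; lra.
have [u hu] : exists u : nat -> car M, forall n, g (u n) < (n.+1%:R)^-1.
  have hpos n : (0 : R) < (n.+1%:R)^-1 by rewrite invr_gt0 ltr0Sn.
  have [u hu] := choice (fun n => happ _ (hpos n)).
  by exists u.
have [a ha] : exists a, forall e, 0 < e -> exists N : nat, forall n, (N <= n)%N -> @dist R M (u n) a < e.
  apply: dist_complete => e he.
  have he2 : 0 < e / 2 by rewrite divr_gt0.
  have [N hN] := small_inv he2; exists N => i j hi hj.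
  have ee : e = e / 2 + e / 2 by rewrite -splitr.
  apply: (le_lt_trans (htri _ _)); have := hu i; have := hu j; have := hN i hi; have := hN j hj.
  set x := (i.+1%:R^-1 : R); set y := (j.+1%:R^-1 : R); lra.
have ga : g a <= 0.
  rewrite leNgt; apply/negP => hga.
  have he : 0 < g a / 2 by rewrite divr_gt0.
  have [N1 hN1] := ha _ he; have [N2 hN2] := small_inv he.
  have h1 := hN1 (maxn N1 N2) (leq_maxl _ _); have h2 := hN2 (maxn N1 N2) (leq_maxr _ _).
  have h3 := hu (maxn N1 N2); have := hlip a (u (maxn N1 N2)).
  have ee : g a = g a / 2 + g a / 2 by rewrite -splitr.
  rewrite dist_sym; set x := ((maxn N1 N2).+1%:R^-1 : R) in h2 h3; lra.
exists a => y; apply/le_anti/andP; split.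
- by have := hlip y a; rewrite dist_sym; have := g0 a; lra.
- by have := htri a y; have := g0 a; lra.
Qed.
Section MSide.
Variables (R : realType) (M : Lstruct R).
Hypothesis hM : modelAA M.
Variables (m : nat) (phi : aform R).
Hypothesis hphi : all (fun k => (k <= m)%N) (afv phi).

Local Notation T := (car M).
Local Notation dM := (@dist R M).
Local Notation ev f v := (aev (ops M) (@dist R M) f v).
Local Notation F v t := (ev phi (upd v 0 t)).
Local Notation MX v := (ev (Mx phi) v).
Local Notation meet := (op_meet (ops M)).
Local Notation chiF := (chi m phi).

Lemma ar1 (x i z y : R) : x - i - z <= 0 -> i <= y -> x <= y + z. Proof. lra. Qed.
Lemma ar2 (x a i b : R) : x - a - i <= 0 -> i <= b -> x <= a + b. Proof. lra. Qed.
Lemma arA (f p q : R) : f + p - q - 0 - 0 <= 0 -> 0 < p -> f < q. Proof. lra. Qed.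
Lemma arB (x i k f : R) : x - i - 0 - k <= 0 -> k <= 0 -> i <= f -> x <= f. Proof. lra. Qed.
Lemma arC (x i f : R) : x - i <= 0 -> i <= f -> f <= x -> f = x.
Proof. move=> h1 h2 h3; apply/le_anti; rewrite h3 /=; lra. Qed.

Lemma evb f v : - bnd f <= ev f v <= bnd f.
Proof. by rewrite -ler_norml; apply: aev_bnd; apply: distM01. Qed.
Lemma evb1 f v : - bnd f <= ev f v. Proof. by case/andP: (evb f v). Qed.
Lemma evb2 f v : ev f v <= bnd f. Proof. by case/andP: (evb f v). Qed.

Lemma dM0 x : dM x x = 0. Proof. exact/dist_eq0. Qed.

Lemma tLip k : k != vA m -> forall v, ev (GLip m chiF k) v <= 0.
Proof.
move=> hk; apply: (transfer hM) => N o d hPA hd v.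
apply: (GLip_PA hd) => // w; exact: (chi_01 hd hPA hphi).
Qed.
Lemma tTri v : ev (GTri m phi) v <= 0.
Proof. by apply: (transfer hM) => N o d hPA hd w; apply: (GTri_PA hd hPA hphi). Qed.
Lemma tInf v : ev (GInf m phi) v <= 0.
Proof. by apply: (transfer hM) => N o d hPA hd w; apply: (GInf_PA hd hPA hphi). Qed.
Lemma tG4 v : ev (G4 m phi) v <= 0.
Proof. by apply: (transfer hM) => N o d hPA hd w; apply: (G4_PA hd hPA hphi). Qed.
Lemma tG5 v : ev (G5 m phi) v <= 0.
Proof. by apply: (transfer hM) => N o d hPA hd w; apply: (G5_PA hd hPA hphi). Qed.
Lemma tG6 v : ev (G6 m phi) v <= 0.
Proof. by apply: (transfer hM) => N o d hPA hd w; apply: (G6_PA hd hPA hphi). Qed.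
Lemma tG7 v : ev (@G7 R m) v <= 0.
Proof. by apply: (transfer hM) => N o d hPA hd w; apply: (G7_PA hd hPA). Qed.
Lemma tG8 v : ev (@G8 R m) v <= 0.
Proof. by apply: (transfer hM) => N o d hPA hd w; apply: (G8_PA hd hPA). Qed.

Lemma chi_freshM k v a : k \notin afv chiF -> ev chiF (upd v k a) = ev chiF v.
Proof. exact: aev_upd_fresh. Qed.

Lemma vA_chi : vA m \notin afv chiF.
Proof. apply/negP => /(afv_chi hphi); rewrite /vA /vY; lia. Qed.
Lemma v0_chi : 0%N \notin afv chiF.
Proof. apply/negP => /(afv_chi hphi); rewrite /vY; lia. Qed.

Lemma GLip_M k : k != vA m -> forall v a, ev chiF v <= ev chiF (upd v k a) + dM (v k) a.
Proof.
move=> hk v a; have h := tLip hk (upd v (vA m) a).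
move: h; rewrite /GLip !aevM aevInf aevD !tevV chi_freshM ?vA_chi // upd_eq upd_neq //.
have hkA : vA m != k by rewrite eq_sym.
set S := [set _ | _ in _].
have hS : inf S <= ev chiF (upd v k a).
  have hb : forall c, - bnd chiF <= ev (APlus chiF (ADist (TVar k) (TVar (vA m)))) (upd (upd v (vA m) a) k c).
    move=> c; rewrite aevP aevD; have := evb1 chiF (upd (upd v (vA m) a) k c).
    have := dist_ge0 (tev (ops M) (upd (upd v (vA m) a) k c) (TVar k))
                     (tev (ops M) (upd (upd v (vA m) a) k c) (TVar (vA m))); lra.
  apply: le_trans (infI_lb hb a) _.
  rewrite aevP aevD !tevV upd_eq upd_neq // upd_eq dM0 addr0.
  rewrite upd_comm; last by [].
  by rewrite chi_freshM; last exact: vA_chi.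
move=> h; exact: ar1 h hS.
Qed.

Definition gY v y := ev chiF (upd v (vY m) y).

Lemma hYA : vY m != vA m. Proof. rewrite /vY /vA; lia. Qed.
Lemma hY0 : vY m != 0%N. Proof. by []. Qed.
Lemma hA0 : vA m != 0%N. Proof. by []. Qed.
Lemma hYf : (vY m == 0)%N || (m < vY m)%N. Proof. rewrite /vY; lia. Qed.
Lemma hAf : (vA m == 0)%N || (m < vA m)%N. Proof. rewrite /vA; lia. Qed.
Lemma h0f : (0 == 0)%N || (m < 0)%N. Proof. by []. Qed.

Lemma gY_lip v y y' : gY v y <= gY v y' + dM y y'.
Proof.
have := GLip_M hYA (upd v (vY m) y) y'.
by rewrite /gY upd_same upd_eq.
Qed.

Lemma gY_tri v y y' : dM y y' <= gY v y + gY v y'.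
Proof.
have := tTri (upd (upd v (vY m) y) (vA m) y').
rewrite /GTri !aevM aevD !tevV aevInf upd_eq upd_neq; last by rewrite hYA.
rewrite upd_eq chi_freshM ?vA_chi //.
set S := [set _ | _ in _].
have hS : inf S <= gY v y'.
  have hb : forall c, - bnd chiF <= ev (APlus chiF (ADist (TVar (vY m)) (TVar (vA m))))
                                      (upd (upd (upd v (vY m) y) (vA m) y') (vY m) c).
    move=> c; rewrite aevP aevD; have := evb1 chiF (upd (upd (upd v (vY m) y) (vA m) y') (vY m) c).
    have := dist_ge0 (tev (ops M) (upd (upd (upd v (vY m) y) (vA m) y') (vY m) c) (TVar (vY m)))
                     (tev (ops M) (upd (upd (upd v (vY m) y) (vA m) y') (vY m) c) (TVar (vA m))); lra.
  apply: le_trans (infI_lb hb y') _.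
  rewrite aevP aevD !tevV upd_eq upd_neq; last by rewrite eq_sym hYA.
  rewrite upd_eq dM0 addr0 upd_comm; last by rewrite eq_sym hYA.
  by rewrite upd_same chi_freshM ?vA_chi.
rewrite /gY in hS *; move=> h; exact: ar2 h hS.
Qed.

Lemma gY_approx v e : 0 < e -> exists y, gY v y < e.
Proof.
move=> he; have := tInf v; rewrite /GInf aevInf => hinf.
have hb : forall y, - bnd chiF <= ev chiF (upd v (vY m) y) by move=> y; apply: evb1.
have [y hy] := infI_approx (op_zero (ops M)) hb he.
by exists y; rewrite /gY; lra.
Qed.

Lemma chi_rep v : exists a, forall y, gY v y = dM a y.
Proof. apply: metric_rep; [exact: gY_approx|exact: gY_tri|exact: gY_lip]. Qed.

Lemma F_updM k v a t : (k == 0)%N || (m < k)%N -> F (upd v k a) t = F v t.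
Proof. exact: (@F_upd R T (ops M) dM m phi hphi k v a t). Qed.
Lemma MX_updM k v a : (k == 0)%N || (m < k)%N -> MX (upd v k a) = MX v.
Proof. exact: (@MX_upd R T (ops M) dM m phi hphi k v a). Qed.

Definition Pm v a := F v a = MX v /\ forall t, Mlt t a -> F v t < F v a.

Lemma F_le_MXM v t : F v t <= MX v.
Proof. by rewrite MxE; exact: (@supI_ub R T (fun t => F v t) (bnd phi) (fun a => evb2 phi (upd v 0 a)) t). Qed.

Lemma PhiI_le t v : (forall u, tev (ops M) (upd v 0 u) t = tev (ops M) v t) ->
  ev (PhiI phi t) v <= F v (tev (ops M) v t).
Proof.
move=> ht; rewrite /PhiI aevInf.
have hK2 : 0 <= K2 phi by have := K2_gt phi; have := Cb_ge0 phi; lra.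
have hb : forall u, - bnd phi <= ev (APlus phi (AScale (K2 phi) (ADist (TVar 0) t))) (upd v 0 u).
  move=> u; rewrite aevP aevS aevD; have := evb1 phi (upd v 0 u).
  have := mulr_ge0 hK2 (dist_ge0 (tev (ops M) (upd v 0 u) (TVar 0)) (tev (ops M) (upd v 0 u) t)); lra.
apply: le_trans (infI_lb hb (tev (ops M) v t)) _.
by rewrite aevP aevS aevD tevV upd_eq ht dM0 mulr0 addr0.
Qed.

Lemma PhiS_ge t v : (forall u, tev (ops M) (upd v 0 u) t = tev (ops M) v t) ->
  F v (tev (ops M) v t) <= ev (PhiS phi t) v.
Proof.
move=> ht; rewrite /PhiS aevSup.
have hK2 : 0 <= K2 phi by have := K2_gt phi; have := Cb_ge0 phi; lra.
have hb : forall u, ev (APlus phi (AScale (- K2 phi) (ADist (TVar 0) t))) (upd v 0 u) <= bnd phi.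
  move=> u; rewrite aevP aevS aevD; have := evb2 phi (upd v 0 u).
  have := mulr_ge0 hK2 (dist_ge0 (tev (ops M) (upd v 0 u) (TVar 0)) (tev (ops M) (upd v 0 u) t)).
  rewrite mulNr; lra.
apply: le_trans _ (supI_ub hb (tev (ops M) v t)).
by rewrite aevP aevS aevD tevV upd_eq ht dM0 mulr0 addr0.
Qed.

Lemma a_props v a : (forall y, gY v y = dM a y) -> Pm v a.
Proof.
move=> ha.
have hchi : ev chiF (upd v (vY m) a) = 0 by have := ha a; rewrite /gY dM0.
have hmax : F v a = MX v.
  have ht : forall u, tev (ops M) (upd (upd v (vY m) a) 0 u) (TVar (vY m))
                      = tev (ops M) (upd v (vY m) a) (TVar (vY m)).
    by move=> u; rewrite !tevV upd_neq.
  have hP := PhiI_le ht; rewrite tevV upd_eq (F_updM _ _ _ hYf) in hP.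
  have h4 := tG4 (upd v (vY m) a).
  rewrite /G4 !aevM aevS hchi mulr0 subr0 (MX_updM _ _ hYf) in h4.
  exact: arC h4 hP (F_le_MXM v a).
split=> // t [hle hne].
set w := upd (upd v (vY m) a) 0 t.
have e0 : w 0%N = t by rewrite /w upd_eq.
have eY : w (vY m) = a by rewrite /w upd_neq ?hY0 // upd_eq.
have h5 := tG5 w.
rewrite /G5 !aevM aevP !aevS !aevD !tevV tevM !tevV e0 eY hle dM0 !mulr0 in h5.
have ephi : ev phi w = F v t by rewrite /w (F_updM _ _ _ hYf).
have eMX : MX w = MX v by rewrite /w (MX_updM _ _ h0f) (MX_updM _ _ hYf).
have echi : ev chiF w = 0 by rewrite /w chi_freshM ?v0_chi.
rewrite ephi eMX echi mulr0 in h5.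
have hd : 0 < dM t a.
  rewrite lt_neqAle dist_ge0 andbT eq_sym; apply/negP => /eqP /dist_eq0; exact: hne.
rewrite -hmax in h5 *; exact: arA h5 (mulr_gt0 (del_gt0 phi) hd).
Qed.

Lemma a_unique v a a' : (forall y, gY v y = dM a y) -> Pm v a' -> a' = a.
Proof.
move=> ha [hmax' hlt'].
have [hmax hlt] := a_props ha.
have hchi : ev chiF (upd v (vY m) a) = 0 by have := ha a; rewrite /gY dM0.
set w := upd (upd v (vY m) a) (vA m) a'.
have eY : w (vY m) = a by rewrite /w upd_neq ?hYA // upd_eq.
have eA : w (vA m) = a' by rewrite /w upd_eq.
have echi : ev chiF w = 0 by rewrite /w chi_freshM ?vA_chi.
have eMX : MX w = MX v by rewrite /w (MX_updM _ _ hAf) (MX_updM _ _ hYf).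
have eF : forall t, F w t = F v t by move=> t; rewrite /w (F_updM _ _ _ hAf) (F_updM _ _ _ hYf).
have hI : ev (PhiI phi (TMeet (TVar (vY m)) (TVar (vA m)))) w <= F v (meet a a').
  have ht : forall u, tev (ops M) (upd w 0 u) (TMeet (TVar (vY m)) (TVar (vA m)))
                    = tev (ops M) w (TMeet (TVar (vY m)) (TVar (vA m))).
    by move=> u; rewrite !tevM !tevV !upd_neq ?hY0 ?hA0.
  by have := PhiI_le ht; rewrite tevM !tevV eY eA eF.
have hS : F v a' <= ev (PhiS phi (TVar (vA m))) w.
  have ht : forall u, tev (ops M) (upd w 0 u) (TVar (vA m)) = tev (ops M) w (TVar (vA m)).
    by move=> u; rewrite !tevV !upd_neq ?hA0.
  by have := PhiS_ge ht; rewrite tevV eA eF.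
have h6 := tG6 w; rewrite /G6 !aevM !aevS aevM echi eMX mulr0 in h6.
have hK3 := K3_ge0 phi.
have hK : K3 phi * (MX v - ev (PhiS phi (TVar (vA m))) w) <= 0.
  by apply: mulr_ge0_le0 hK3 _; rewrite subr_le0 -hmax'.
have hmeet : MX v <= F v (meet a a') by exact: arB h6 hK hI.
have h7 := tG7 w; rewrite /G7 aevD !tevM !tevV eY eA in h7.
have e7 : meet (meet a a') a' = meet a a'.
  by apply/dist_eq0/le_anti; rewrite h7 dist_ge0.
have e8 : meet a a' = a'.
  apply: NNP => ne; have h := hlt' (meet a a') (conj e7 ne); rewrite hmax' in h.
  by move: (lt_le_trans h hmeet); rewrite ltxx.
have h8 := tG8 w; rewrite /G8 aevD !tevM !tevV eY eA in h8.
have e9 : meet a a' = meet a' a by apply/dist_eq0/le_anti; rewrite h8 dist_ge0.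
apply: NNP => ne; have h := hlt a' (conj (etrans (esym e9) e8) ne).
by move: h; rewrite hmax' hmax ltxx.
Qed.
End MSide.
Fixpoint shiftchain (R : realType) (j : nat) (G : aform R) : aform R :=
  match j with
  | 0 => G
  | j'.+1 => AInf j'.+1 (APlus (ADist (TVar j'.+1) (TVar j')) (shiftchain j' G))
  end.

Fixpoint shiftenv (T : Type) (j : nat) (v : nat -> T) : nat -> T :=
  match j with
  | 0 => v
  | j'.+1 => shiftenv j' (upd v j'.+1 (v j'))
  end.

Lemma shiftenv_upd T j (v : nat -> T) k a : (j < k)%N ->
  shiftenv j (upd v k a) = upd (shiftenv j v) k a.
Proof.
elim: j v => [|j ih] v hk //=.
have hjk : j != k by apply/eqP => e; move: hk; rewrite e; lia.
have hjk' : j.+1 != k by apply/eqP => e; move: hk; rewrite e; lia.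
rewrite upd_neq // upd_comm; last by rewrite eq_sym.
by rewrite ih //; lia.
Qed.

Lemma shiftenv_val T j (v : nat -> T) k :
  shiftenv j v k = if (0 < k <= j)%N then v k.-1 else v k.
Proof.
elim: j v => [|j ih] v /=; first by case: k.
rewrite ih; case hk: (0 < k <= j)%N.
- have -> : (0 < k <= j.+1)%N by lia.
  rewrite upd_neq //; apply/eqP => e; move: hk e; lia.
- case: (k =P j.+1) => [->|nk].
  + by rewrite upd_eq /= ltnSn.
  + rewrite upd_neq; last by apply/eqP.
    have -> : (0 < k <= j.+1)%N = false by move: hk nk => /negbT; lia.
    by [].
Qed.

Section Shift.
Variables (R : realType) (M : Lstruct R).
Local Notation ev f v := (aev (ops M) (@dist R M) f v).
Local Notation dM := (@dist R M).

Lemma shift_sem (G : aform R) j :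
  (forall k, (0 < k <= j)%N -> forall w a, ev G w <= ev G (upd w k a) + dM (w k) a) ->
  forall v, ev (shiftchain j G) v = ev G (shiftenv j v).
Proof.
elim: j => [|j ih] hL v //=.
have hL' : forall k, (0 < k <= j)%N -> forall w a, ev G w <= ev G (upd w k a) + dM (w k) a.
  by move=> k hk; apply: hL; lia.
set W := shiftenv j v.
have eS : forall a, ev G (shiftenv j (upd v j.+1 a)) = ev G (upd W j.+1 a).
  by move=> a; rewrite /W shiftenv_upd.
have -> : [set ev (APlus (ADist (TVar j.+1) (TVar j)) (shiftchain j G)) (upd v j.+1 a) | a in [set: car M]]
   = [set dM a (v j) + ev G (upd W j.+1 a) | a in [set: car M]].
  apply: set_img_ext => a; rewrite aevP aevD !tevV upd_eq upd_neq; last by lia.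
  by rewrite ih // eS.
rewrite eS; apply: (infI_eq (op_zero (ops M))); last first.
  by exists (v j); rewrite (_ : dM (v j) (v j) = 0) ?add0r //; apply/dist_eq0.
move=> a; have := hL j.+1 (ltac:(lia)) (upd W j.+1 (v j)) a.
by rewrite upd_same upd_eq dist_sym addrC.
Qed.
End Shift.
Lemma upd_tenv (R : realType) (M : Lstruct R) (m : nat) (x t : car M) (b : 'I_m -> car M) :
  upd (tenv x b) 0 t = tenv t b.
Proof. by apply: funext => -[|k]. Qed.

Unset Implicit Arguments.

Theorem mainTheorem3 (R : realType) (M : Lstruct R) (hM : modelAA M)
  (m : nat) (phi : aform R) (hphi : all (fun k => (k <= m)%N) (afv phi)) :
  (forall b : 'I_m -> car M,
     exists! a : car M,
       aev (ops M) (@dist R M) phi (tenv a b)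
         = sup [set aev (ops M) (@dist R M) phi (tenv x b) | x in [set: car M]]
       /\ (forall t : car M, Mlt t a ->
             aev (ops M) (@dist R M) phi (tenv t b)
               < aev (ops M) (@dist R M) phi (tenv a b)))
  /\
  (forall f : ('I_m -> car M) -> car M,
     (forall b : 'I_m -> car M,
        aev (ops M) (@dist R M) phi (tenv (f b) b)
          = sup [set aev (ops M) (@dist R M) phi (tenv x b) | x in [set: car M]]
        /\ (forall t : car M, Mlt t (f b) ->
              aev (ops M) (@dist R M) phi (tenv t b)
                < aev (ops M) (@dist R M) phi (tenv (f b) b))) ->
     definable f).
Proof.
set z0 := op_zero (ops M).
have PE : forall (b : 'I_m -> car M) (a : car M), Pm phi (tenv z0 b) a <->
   (aev (ops M) (@dist R M) phi (tenv a b)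
         = sup [set aev (ops M) (@dist R M) phi (tenv x b) | x in [set: car M]]
       /\ (forall t : car M, Mlt t a ->
             aev (ops M) (@dist R M) phi (tenv t b)
               < aev (ops M) (@dist R M) phi (tenv a b))).
  move=> b a; rewrite /Pm MxE.
  have -> : [set aev (ops M) (@dist R M) phi (upd (tenv z0 b) 0 t) | t in [set: car M]]
          = [set aev (ops M) (@dist R M) phi (tenv t b) | t in [set: car M]].
    by apply: set_img_ext => t; rewrite upd_tenv.
  rewrite upd_tenv; split; case=> h1 h2; split=> // t ht; have := h2 t ht; by rewrite !upd_tenv.
split.
- move=> b; have [a ha] := chi_rep hM hphi (tenv z0 b).
  exists a; split; first by apply/PE; have := a_props hM hphi ha; apply.
  by move=> a' /PE h; have := a_unique hM hphi ha h; move=> ->.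
- move=> f hf e he.
  pose psi := AInf (vY m) (APlus (ADist (TVar (vY m)) (TVar m)) (shiftchain m (chi m phi))).
  exists psi, (fun _ => z0) => b y.
  have [a ha] := chi_rep hM hphi (tenv z0 b).
  have efb : f b = a by have := a_unique hM hphi ha (iffRL (PE b (f b)) (hf b)); apply.
  set u := denv b y (fun _ => z0).
  have hL : forall k, (0 < k <= m)%N -> forall w c,
      aev (ops M) (@dist R M) (chi m phi) w
        <= aev (ops M) (@dist R M) (chi m phi) (upd w k c) + @dist R M (w k) c.
    move=> k hk; apply: (GLip_M hM hphi); rewrite /vA; lia.
  have hchi : forall c, aev (ops M) (@dist R M) (chi m phi) (upd (shiftenv m u) (vY m) c)
                        = @dist R M a c.
    move=> c; rewrite -(ha c) /gY; apply: aev_agree => k hk.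
    have := afv_chi hphi hk; case/orP => [/eqP ->|hk']; first by rewrite !upd_eq.
    have hkY : k != vY m by rewrite /vY; lia.
    rewrite !upd_neq // shiftenv_val hk' /u /denv.
    case: k hk hk' hkY => [|k] //= _ hk' _.
    case: insubP => [i _ _|hn] //.
    by exfalso; move: hn hk'; lia.
  have um : u m = y.
    rewrite /u /denv; case: insubP => [i hi _|_]; first by exfalso; move: hi; lia.
    by rewrite eqxx.
  have -> : aev (ops M) (@dist R M) psi u = @dist R M a y.
    rewrite /psi aevInf.
    have -> : [set aev (ops M) (@dist R M) (APlus (ADist (TVar (vY m)) (TVar m))
                   (shiftchain m (chi m phi))) (upd u (vY m) c) | c in [set: car M]]
            = [set @dist R M c y + @dist R M a c | c in [set: car M]].
      apply: set_img_ext => c; rewrite aevP aevD !tevV upd_eq upd_neq; last by rewrite /vY; lia.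
      by rewrite um (shift_sem hL) shiftenv_upd ?hchi // /vY.
    apply: (infI_eq z0).
    + by move=> c; rewrite addrC; apply: dist_tri.
    + by exists y; rewrite (_ : @dist R M y y = 0) ?add0r //; apply/dist_eq0.
  by rewrite efb subrr normr0 ltW.
Qed.
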